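(* Let $m\ge2$, let $\eta$ be a primitive $m$-th root of unity, and let $F(x,y)=(x+y)^m$. Consider real polynomials $G(x,y)$ such that $G(\eta x,\eta y)=G(x,y)$, $G=1$ on the line $x+y=1$, $G$ has only non-negative coefficients, $G(0,0)=0$, and such that the polynomial $H=(G-F)/(F-1)$ (so that $G=F-H+HF$) has only non-negative coefficients. For such $G$, the number of terms $N(G)$ is either $m+1$ or at least $2m+1$; that is, $N(G)$ lies neither in $\{1,\dots,m\}$ nor in $\{m+2,\dots,2m\}$. Conversely, $m+1$ and every integer $N\ge 2m+1$ occur as $N(G)$ for some such $G$.
   Context: $N(q)$ denotes the number of distinct monomials with nonzero coefficient in $q$. For $G$ as described, $G-F$ is divisible by $F-1$, so $H$ is a polynomial. *)

(* Defs.v *)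
From HB Require Import structures.
From mathcomp Require Import all_boot all_order all_algebra.
From mathcomp Require Import mpoly.
From mathcomp Require Import complex.
Set Implicit Arguments. Unset Strict Implicit. Unset Printing Implicit Defensive.
Import Order.TTheory GRing.Theory Num.Theory.
Local Open Scope ring_scope.

(* F(x,y) = (x+y)^m as a bivariate polynomial; 'X_0 = x, 'X_1 = y. *)
Definition Fpoly (R : rcfType) (m : nat) : {mpoly R[2]} :=
  ('X_0 + 'X_1) ^+ m.

Definition Nterms (R : rcfType) (q : {mpoly R[2]}) : nat := size (msupp q).

Definition ev2 (S : comRingType) (q : {mpoly S[2]}) (x y : S) : S :=
  q.@[[ffun i : 'I_2 => if val i == 0%N then x else y]].

Definition admissible (R : rcfType) (m : nat) (eta : R[i]) (G : {mpoly R[2]}) :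
  Prop :=
  let GC := map_mpoly (real_complex R) G in
  [/\ (forall x y : R[i], ev2 GC (eta * x) (eta * y) = ev2 GC x y),
      (forall x y : R, x + y = 1 -> ev2 G x y = 1),
      (forall mo, 0 <= G@_mo),
      ev2 G 0 0 = 0 &
      exists H : {mpoly R[2]},
        G = Fpoly R m - H + H * Fpoly R m /\ (forall mo, 0 <= H@_mo)].

(* Main.v *)
Require Import Defs.
From HB Require Import structures.
From mathcomp Require Import all_boot all_order all_algebra.
From mathcomp Require Import mpoly.
From mathcomp Require Import complex.
From mathcomp Require Import ring lra zify.
Import Order.TTheory GRing.Theory Num.Theory.
Set Implicit Arguments. Unset Strict Implicit. Unset Printing Implicit Defensive.
Local Open Scope ring_scope.

Definition mon (a b : nat) : 'X_{1..2} := mnm_add (mnm_muln (mnm1 (0%R : 'I_2)) a) (mnm_muln (mnm1 (1%R : 'I_2)) b).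

Lemma mon0 a b : (mon a b) 0 = a.
Proof. by rewrite /mon mnmDE !mulmnE !mnm1E /= mul1n mul0n addn0. Qed.
Lemma mon1 a b : (mon a b) 1 = b.
Proof. by rewrite /mon mnmDE !mulmnE !mnm1E /= mul1n mul0n. Qed.
Lemma mdeg_mon a b : mdeg (mon a b) = (a + b)%N.
Proof. by rewrite /mon mdegD !mdegMn !mdeg1 !mul1n. Qed.

Lemma Xmon (R : rcfType) a b : ('X_[mon a b] : {mpoly R[2]}) = 'X_0 ^+ a * 'X_1 ^+ b.
Proof. by rewrite /mon mpolyXD !mpolyXn. Qed.

Lemma monP (u : 'X_{1..2}) : u = mon (u 0) (u 1).
Proof.
apply/mnmP => i; case: i => [[|[|//]] Hi].
- have -> : Ordinal Hi = 0 by apply/val_inj.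
  by rewrite mon0.
- have -> : Ordinal Hi = 1 by apply/val_inj.
  by rewrite mon1.
Qed.

Definition nonneg (R : rcfType) (p : {mpoly R[2]}) := forall mo, 0 <= p@_mo.

Lemma nonnegD (R : rcfType) (p q : {mpoly R[2]}) : nonneg p -> nonneg q -> nonneg (p + q).
Proof. by move=> hp hq mo; rewrite mcoeffD addr_ge0. Qed.
Lemma nonnegM (R : rcfType) (p q : {mpoly R[2]}) : nonneg p -> nonneg q -> nonneg (p * q).
Proof.
move=> hp hq mo; rewrite mcoeffM; apply: sumr_ge0 => k _; exact: mulr_ge0.
Qed.
Lemma nonnegX (R : rcfType) (u : 'X_{1..2}) : nonneg ('X_[u] : {mpoly R[2]}).
Proof. by move=> mo; rewrite mcoeffX ler0n. Qed.
Lemma nonneg1 (R : rcfType) : nonneg (1 : {mpoly R[2]}).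
Proof. by move=> mo; rewrite mcoeff1 ler0n. Qed.
Lemma nonnegZ (R : rcfType) (c : R) (p : {mpoly R[2]}) : 0 <= c -> nonneg p -> nonneg (c *: p).
Proof. by move=> hc hp mo; rewrite mcoeffZ mulr_ge0. Qed.
Lemma nonnegXn (R : rcfType) (p : {mpoly R[2]}) k : nonneg p -> nonneg (p ^+ k).
Proof.
move=> hp; elim: k => [|k IH]; first by rewrite expr0; apply: nonneg1.
by rewrite exprS; apply: nonnegM.
Qed.
Lemma nonneg_sum (R : rcfType) n (f : nat -> {mpoly R[2]}) :
  (forall i, nonneg (f i)) -> nonneg (\sum_(i < n) f i).
Proof.
move=> hf; elim: n => [|n IH]; first by rewrite big_ord0 => mo; rewrite mcoeff0.
by rewrite big_ord_recr; apply: nonnegD.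
Qed.

Lemma expand (R : rcfType) a n : (n <= a)%N ->
  ('X_0 ^+ (a - n) * ('X_0 + 'X_1) ^+ n : {mpoly R[2]}) =
  \sum_(i < a.+1) ('C(n, i))%:R *: 'X_[mon (a - i) i].
Proof.
move=> hna; rewrite exprDn mulr_sumr.
pose F := (fun i : nat => ('C(n, i))%:R *: ('X_[mon (a - i) i] : {mpoly R[2]})).
transitivity (\sum_(i < n.+1) F (i : nat)).
  apply: eq_bigr => i _; rewrite /F Xmon mulrnAr -scaler_nat mulrA -exprD.
  have hi := ltn_ord i.
  by congr (_ *: (_ ^+ _ * _)); lia.
rewrite (big_ord_widen a.+1 F); last by lia.
rewrite big_mkcond /=; apply: eq_bigr => i _.
case: ifP => hi //.
by rewrite /F bin_small ?scale0r //; lia.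
Qed.
Lemma mon_inj a : injective (fun i => mon (a - i) i).
Proof. by move=> i j /= /(congr1 (fun u : 'X_{1..2} => u 1)); rewrite !mon1. Qed.

Lemma Nterms_sum (R : rcfType) a n (c : nat -> R) :
  Nterms (\sum_(i < n) c i *: ('X_[mon (a - i) i] : {mpoly R[2]})) =
  count (fun i => c i != 0) (iota 0 n).
Proof.
pose g := (fun i => mon (a - i) i).
pose s := filter (fun i => c i != 0) (iota 0 n).
have -> : \sum_(i < n) c i *: ('X_[mon (a - i) i] : {mpoly R[2]}) =
   \sum_(u <- map g s) c (u 1) *: 'X_[u].
  rewrite big_map big_filter -(big_mkord xpredT (fun i => c i *: 'X_[mon (a - i) i])).
  rewrite /index_iota subn0 (bigID (fun i => c i != 0)) /= [X in _ + X]big1 ?addr0.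
    by apply: eq_bigr => i _; rewrite /g mon1.
  by move=> i /negbNE/eqP ->; rewrite scale0r.
rewrite /Nterms (perm_size (msupp_sumX _ _)).
- by rewrite size_map size_filter.
- by rewrite map_inj_uniq ?filter_uniq ?iota_uniq //; apply: mon_inj.
- move=> u hu; case/mapP: hu => i; rewrite mem_filter => /andP [hi _] ->.
  by rewrite /g mon1.
Qed.

Lemma Nterms_binom (R : rcfType) k :
  Nterms (('X_0 + 'X_1) ^+ k : {mpoly R[2]}) = k.+1.
Proof.
have := expand R (leqnn k); rewrite subnn expr0 mul1r => ->.
rewrite (Nterms_sum _ _ (fun i => ('C(k, i))%:R)) (eq_in_count (a2 := predT)) ?count_predT ?size_iota //.
move=> i; rewrite mem_iota /= => hi; rewrite pnatr_eq0 -lt0n bin_gt0; lia.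
Qed.

Lemma Fexp (R : rcfType) m :
  Fpoly R m = \sum_(i < m.+1) ('C(m, i))%:R *: 'X_[mon (m - i) i].
Proof. by rewrite /Fpoly -(expand R (leqnn m)) subnn expr0 mul1r. Qed.

Lemma mcoeff_sumo (R : rcfType) n (f : 'I_n -> {mpoly R[2]}) u :
  (\sum_(i < n) f i)@_u = \sum_(i < n) (f i)@_u.
Proof. exact: raddf_sum. Qed.

Lemma coefF_ge (R : rcfType) m (q : {mpoly R[2]}) i t : nonneg q -> (i <= m)%N ->
  ('C(m, i))%:R * q@_t <= (q * Fpoly R m)@_(mon (m - i) i + t).
Proof.
move=> hq him; rewrite Fexp mulr_sumr mcoeff_sumo.
have hi : (i < m.+1)%N by [].
rewrite (bigD1 (Ordinal hi)) //= -scalerAr mcoeffZ mcoeffMX lerDl.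
apply: sumr_ge0 => j _; rewrite -scalerAr mcoeffZ mulr_ge0 ?ler0n //.
by apply: nonnegM => // mo; rewrite mcoeffX ler0n.
Qed.

Lemma coefMX0 (R : rcfType) (q : {mpoly R[2]}) (M : 'X_{1..2}) :
  M != 0%MM -> (q * 'X_[M])@_0%MM = 0.
Proof.
move=> hM; apply/eqP; rewrite -[_ == 0]negbK -mcoeff_msupp (perm_mem (msuppMX _ _)).
apply/negP => /mapP [u _] /(congr1 mdeg) /eqP; rewrite mdegD mdeg0 eq_sym addn_eq0.
by rewrite mdeg_eq0 (negbTE hM).
Qed.

Lemma coefF0 (R : rcfType) m (q : {mpoly R[2]}) : (1 <= m)%N -> (q * Fpoly R m)@_0%MM = 0.
Proof.
move=> hm; rewrite Fexp mulr_sumr mcoeff_sumo big1 // => i _.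
rewrite -scalerAr mcoeffZ coefMX0 ?mulr0 //.
by rewrite -mdeg_eq0 mdeg_mon; have := ltn_ord i; lia.
Qed.

Lemma exists_max (T : eqType) (f : T -> nat) (s : seq T) : s != [::] ->
  exists2 y, y \in s & forall z, z \in s -> (f z <= f y)%N.
Proof.
elim: s => [//|x s IH] _.
case: (eqVneq s [::]) => [->|hs].
  by exists x => [|z]; rewrite ?mem_head // inE => /eqP ->.
have [y ys hy] := IH hs.
case: (leqP (f x) (f y)) => hxy.
  exists y; first by rewrite inE ys orbT.
  by move=> z; rewrite inE => /orP [/eqP ->|/hy].
exists x; first exact: mem_head.
move=> z; rewrite inE => /orP [/eqP ->//|/hy hz]; lia.
Qed.

Notation o0 := (0%R : 'I_2).
Notation o1 := (1%R : 'I_2).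

Lemma mnmD_coord (u v : 'X_{1..2}) (k : 'I_2) : (u + v)%MM k = (u k + v k)%N.
Proof. exact: mnmDE. Qed.
Lemma uniq_map_add (v : 'X_{1..2}) (s : seq 'X_{1..2}) : uniq s -> uniq [seq (v + t)%MM | t <- s].
Proof. by move=> h; rewrite map_inj_uniq // => x y; apply: addmI. Qed.

Lemma lower (R : rcfType) m (G H : {mpoly R[2]}) : (1 <= m)%N ->
  nonneg G -> nonneg H -> G = Fpoly R m - H + H * Fpoly R m ->
  H = 0 \/ (2 * m + 1 <= Nterms G)%N.
Proof.
move=> hm hG hH eG.
pose q := 1 + H.
have GH u : G@_u + H@_u = (q * Fpoly R m)@_u.
  by rewrite -mcoeffD eG; congr (_@_u); rewrite /q; ring.
have H0 : H@_0%MM = 0.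
  have := GH 0%MM; rewrite coefF0 // => e.
  have := hG 0%MM; have := hH 0%MM; lra.
have qnn : nonneg q by apply: nonnegD => //; apply: nonneg1.
case: (eqVneq H 0) => [->|Hn0]; [by left | right].
pose S := msupp H.
have SN : S != [::] by rewrite msupp_eq0.
have [s sS smax] := exists_max (fun u : 'X_{1..2} => u 0) SN.
have S0 : (0%MM : 'X_{1..2}) \notin S by rewrite mcoeff_msupp H0 eqxx.
have s0 : s != 0%MM by apply: contraNneq S0 => <-.
have qpos t : t \in (0%MM : 'X_{1..2}) :: S -> 0 < q@_t.
  rewrite inE => /orP [/eqP ->|tS].
    by rewrite /q mcoeffD mcoeff1 eqxx H0 addr0 ltr01.
  rewrite /q mcoeffD mcoeff1; have h1 := hH t.
  have h2 : 0 <= ((t == 0%MM)%:R : R) by rewrite ler0n.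
  have h3 : H@_t != 0 by rewrite -mcoeff_msupp.
  have h4 : 0 < H@_t by rewrite lt_def h3 h1.
  lra.
have tmax t : t \in (0%MM : 'X_{1..2}) :: S -> (t o0 <= s o0)%N.
  by rewrite inE => /orP [/eqP ->|/smax //]; rewrite mnm0E.
pose P i := mon (m - i) i.
have Upos i t : (i <= m)%N -> t \in (0%MM : 'X_{1..2}) :: S ->
    (P i + t)%MM \in msupp G ++ S.
  move=> him ht; have := coefF_ge t qnn him; rewrite -GH => hge.
  have hc : 0 < ('C(m, i))%:R * q@_t by rewrite mulr_gt0 ?qpos // ltr0n bin_gt0.
  rewrite mem_cat !mcoeff_msupp.
  case: (eqVneq (G@_(P i + t)%MM) 0) => //= g0.
  case: (eqVneq (H@_(P i + t)%MM) 0) => //= h0.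
  by move: hge; rewrite g0 h0 addr0 => hge; have := lt_le_trans hc hge; rewrite ltxx.
pose U1 := [seq (P m + t)%MM | t <- (0%MM : 'X_{1..2}) :: S].
pose U2 := [seq (P i + 0)%MM | i <- iota 0 m].
pose U3 := [seq (P i + s)%MM | i <- iota 0 m].
have Usub : {subset U1 ++ U2 ++ U3 <= msupp G ++ S}.
  move=> u; rewrite !mem_cat => /or3P [] /mapP [x hx ->]; rewrite -mem_cat.
  - exact: Upos.
  - by apply: Upos; [move: hx; rewrite mem_iota; lia | exact: mem_head].
  - by apply: Upos; [move: hx; rewrite mem_iota; lia | rewrite inE sS orbT].
have c0 i t : (P i + t)%MM o0 = (m - i + t o0)%N by rewrite mnmDE mon0.
have c1 i t : (P i + t)%MM o1 = (i + t o1)%N by rewrite mnmDE mon1.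
have dg i t : (i <= m)%N -> mdeg (P i + t)%MM = (m + mdeg t)%N.
  by move=> hi; rewrite mdegD mdeg_mon; lia.
have Uuniq : uniq (U1 ++ U2 ++ U3).
  rewrite /U1 /U2 /U3 !cat_uniq; apply/and5P; split.
  - by apply: uniq_map_add; rewrite /= S0 msupp_uniq.
  - rewrite has_cat negb_or; apply/andP; split; apply/hasPn => u /mapP [i hi ->];
      apply/mapP => [[t ht]]; move: hi; rewrite mem_iota => hi.
    + move/(congr1 (fun v : 'X_{1..2} => v o1)); rewrite !c1 mnm0E; lia.
    + move/(congr1 (fun v : 'X_{1..2} => v o0)); rewrite !c0.
      have := tmax t ht; lia.
  - rewrite map_inj_uniq ?iota_uniq // => i j /(congr1 (fun v : 'X_{1..2} => v 1)) /eqP.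
    by rewrite !c1 eqn_add2r => /eqP.
  - apply/hasPn => u /mapP [i hi ->]; apply/mapP => [[j hj]] /(congr1 mdeg) /eqP.
    move: hi hj; rewrite !mem_iota => hi hj.
    rewrite !dg ?mdeg0; try lia.
    by rewrite eqn_add2l mdeg_eq0 (negbTE s0).
  - rewrite map_inj_uniq ?iota_uniq // => i j /(congr1 (fun v : 'X_{1..2} => v 1)) /eqP.
    by rewrite !c1 eqn_add2r => /eqP.
have h := uniq_leq_size Uuniq Usub.
have e1 : size (msupp G ++ S) = (Nterms G + size S)%N by rewrite size_cat.
have e2 : size (U1 ++ U2 ++ U3) = (size ((0%MM : 'X_{1..2}) :: S) + (m + m))%N.
  by rewrite /U1 /U2 /U3 !size_cat !size_map size_iota.
have e3 : size ((0%MM : 'X_{1..2}) :: S) = (size S).+1 by [].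
rewrite e1 e2 e3 in h; lia.
Qed.

Lemma Nterms_MX (R : rcfType) (p : {mpoly R[2]}) (M : 'X_{1..2}) :
  Nterms (p * 'X_[M]) = Nterms p.
Proof. by rewrite /Nterms (perm_size (msuppMX _ _)) size_map. Qed.

Definition lowdeg (R : rcfType) D (p : {mpoly R[2]}) :=
  forall u, u \in msupp p -> (mdeg u <= D)%N.

Lemma lowdegD (R : rcfType) D (p q : {mpoly R[2]}) :
  lowdeg D p -> lowdeg D q -> lowdeg D (p + q).
Proof.
move=> hp hq u /msuppD_le; rewrite mem_cat => /orP [/hp|/hq] //.
Qed.

Lemma lowdeg_homog (R : rcfType) D d (p : {mpoly R[2]}) :
  p \is d.-homog -> (d <= D)%N -> lowdeg D p.
Proof. by move=> hp hd u /(dhomog_mf hp) ->. Qed.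

Lemma Nterms_add_deg (R : rcfType) D d (p q : {mpoly R[2]}) :
  lowdeg D p -> q \is d.-homog -> (D < d)%N -> Nterms (p + q) = (Nterms p + Nterms q)%N.
Proof.
move=> hp hq hD.
have disj u : u \in msupp p -> u \in msupp q -> False.
  by move=> /hp h1 /(dhomog_mf hq) h2; rewrite h2 in h1; lia.
rewrite /Nterms -size_cat; apply: perm_size; apply: uniq_perm.
- exact: msupp_uniq.
- rewrite cat_uniq !msupp_uniq andbT /=; apply/hasPn => u hu; apply/negP => hu'.
  exact: (disj u hu' hu).
- move=> u; rewrite mem_cat !mcoeff_msupp mcoeffD.
  case: (eqVneq (p@_u) 0) => hpu; case: (eqVneq (q@_u) 0) => hqu //=.
  + by rewrite hpu hqu addr0 eqxx.
  + by rewrite hpu add0r hqu.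
  + by rewrite hqu addr0 hpu.
  + exfalso; apply: (disj u); by rewrite mcoeff_msupp.
Qed.

Lemma homog_sumX (R : rcfType) k n (c : nat -> R) : (n <= k.+1)%N ->
  (\sum_(i < n) c i *: ('X_[mon (k - i) i] : {mpoly R[2]})) \is k.-homog.
Proof.
move=> hn; apply: rpred_sum => i _; apply: rpredZ; rewrite dhomogX /= mdeg_mon.
by have hi := ltn_ord i; apply/eqP; lia.
Qed.

Definition Xp (R : rcfType) m : {mpoly R[2]} := 'X_0 ^+ m.
Definition Bp (R : rcfType) m r : {mpoly R[2]} := 'X_0 ^+ (m - r) * ('X_0 + 'X_1) ^+ r.

Lemma Bp0 (R : rcfType) m : Bp R m 0 = Xp R m.
Proof. by rewrite /Bp /Xp subn0 expr0 mulr1. Qed.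

Lemma XpnE (R : rcfType) m k : Xp R m ^+ k = 'X_[mon (m * k) 0].
Proof. by rewrite /Xp -exprM Xmon expr0 mulr1. Qed.

Lemma FBsum (R : rcfType) m r : (r <= m)%N ->
  Fpoly R m - Bp R m r =
  \sum_(i < m.+1) (('C(m, i))%:R - ('C(r, i))%:R) *: 'X_[mon (m - i) i].
Proof.
move=> hr; rewrite Fexp /Bp (expand R hr) -sumrB.
by apply: eq_bigr => i _; rewrite scalerBl.
Qed.

Lemma FB_nonneg (R : rcfType) m r : (r <= m)%N -> nonneg (Fpoly R m - Bp R m r).
Proof.
move=> hr; rewrite FBsum //; apply: (@nonneg_sum R m.+1
   (fun i => (('C(m, i))%:R - ('C(r, i))%:R) *: 'X_[mon (m - i) i])) => i.
apply: nonnegZ; last exact: nonnegX.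
by rewrite subr_ge0 ler_nat leq_bin2l.
Qed.

Lemma bin_lt r m i : (r < m)%N -> (1 <= i <= m)%N -> ('C(r, i) < 'C(m, i))%N.
Proof.
move=> hrm /andP [hi1 him].
case: (leqP i r) => hir.
- case: i hi1 him hir => [//|i] _ him hir.
  have h1 : ('C(r, i.+1) <= 'C(m.-1, i.+1))%N by apply: leq_bin2l; lia.
  have h2 : (0 < 'C(m.-1, i))%N by rewrite bin_gt0; lia.
  have e : 'C(m, i.+1) = ('C(m.-1, i.+1) + 'C(m.-1, i))%N.
    by case: m hrm him h1 h2 => [//|m'] _ _ _ _; rewrite binS.
  lia.
- by rewrite bin_small // bin_gt0.
Qed.

Lemma FB_Nterms (R : rcfType) m r : (r < m)%N -> Nterms (Fpoly R m - Bp R m r) = m.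
Proof.
move=> hr; rewrite FBsum ?(ltnW hr) //.
rewrite (Nterms_sum _ _ (fun i => ('C(m, i))%:R - ('C(r, i))%:R)).
rewrite -[m.+1]add1n iotaD /= !bin0 subrr eqxx /= add0n.
rewrite (eq_in_count (a2 := predT)) ?count_predT ?size_iota //.
move=> i; rewrite mem_iota => hi /=; rewrite subr_eq0 eqr_nat neq_ltn.
by rewrite (bin_lt hr) ?orbT //; lia.
Qed.

Lemma FB_homog (R : rcfType) m r : (r <= m)%N -> Fpoly R m - Bp R m r \is m.-homog.
Proof. by move=> hr; rewrite FBsum //; apply: (@homog_sumX R m m.+1 (fun i => ('C(m, i))%:R - ('C(r, i))%:R)). Qed.

Lemma BF_eq (R : rcfType) m r : (r <= m)%N ->
  Bp R m r * Fpoly R m = ('X_0 + 'X_1) ^+ (r + m) * 'X_[mon (m - r) 0].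
Proof.
move=> hr; rewrite /Bp /Fpoly Xmon expr0 mulr1 exprD; ring.
Qed.

Lemma BF_Nterms (R : rcfType) m r : (r <= m)%N -> Nterms (Bp R m r * Fpoly R m) = (r + m).+1.
Proof. by move=> hr; rewrite BF_eq // Nterms_MX Nterms_binom. Qed.

Lemma BF_homog (R : rcfType) m r : (r <= m)%N -> Bp R m r * Fpoly R m \is (m + m).-homog.
Proof.
move=> hr; rewrite BF_eq //.
have := expand R (leqnn (r + m)); rewrite subnn expr0 mul1r => ->.
have -> : (m + m = (r + m) + (m - r))%N by lia.
apply: dhomogM; first exact: (@homog_sumX R (r + m) (r + m).+1 (fun i => ('C(r + m, i))%:R)).
by rewrite dhomogX /= mdeg_mon addn0.
Qed.

Definition Hf (R : rcfType) m r e : {mpoly R[2]} :=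
  \sum_(k < e) Xp R m ^+ k.+1 + Xp R m ^+ e * Bp R m r.

Lemma Gdecomp (R : rcfType) m r e :
  Fpoly R m - Hf R m r e + Hf R m r e * Fpoly R m =
  \sum_(k < e) Xp R m ^+ k * (Fpoly R m - Bp R m 0) +
  Xp R m ^+ e * (Fpoly R m - Bp R m r) + Xp R m ^+ e * (Bp R m r * Fpoly R m).
Proof.
rewrite Bp0 /Hf.
set F := Fpoly R m; set X := Xp R m; set B := Bp R m r.
elim: e => [|e IH]; first by rewrite !big_ord0 !expr0; ring.
rewrite !big_ord_recr /=.
set A := \sum_(k < e) X ^+ k.+1; set C := \sum_(k < e) X ^+ k * (F - X).
fold A C in IH.
apply/eqP; rewrite -subr_eq0; apply/eqP.
have -> : F - (A + X ^+ e.+1 + X ^+ e.+1 * B) + (A + X ^+ e.+1 + X ^+ e.+1 * B) * F -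
  (C + X ^+ e * (F - X) + X ^+ e.+1 * (F - B) + X ^+ e.+1 * (B * F)) =
  (F - (A + X ^+ e * B) + (A + X ^+ e * B) * F) -
  (C + X ^+ e * (F - B) + X ^+ e * (B * F)) by rewrite !exprS; ring.
by rewrite IH subrr.
Qed.

Lemma lowdeg0 (R : rcfType) D : lowdeg D (0 : {mpoly R[2]}).
Proof. by move=> u; rewrite msupp0. Qed.

Lemma XpF_homog (R : rcfType) m r k : (r <= m)%N ->
  Xp R m ^+ k * (Fpoly R m - Bp R m r) \is (m * k + m).-homog.
Proof.
move=> hr; rewrite XpnE; apply: dhomogM; last exact: FB_homog.
by rewrite dhomogX /= mdeg_mon addn0.
Qed.

Lemma Nterms_XpM (R : rcfType) m k (p : {mpoly R[2]}) : Nterms (Xp R m ^+ k * p) = Nterms p.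
Proof. by rewrite mulrC XpnE Nterms_MX. Qed.

Lemma sum_count (R : rcfType) m e : (1 <= m)%N ->
  Nterms (\sum_(k < e) Xp R m ^+ k * (Fpoly R m - Bp R m 0)) = (e * m)%N /\
  lowdeg (e * m) (\sum_(k < e) Xp R m ^+ k * (Fpoly R m - Bp R m 0)).
Proof.
move=> hm; elim: e => [|e [IH1 IH2]].
  by rewrite big_ord0 /Nterms msupp0; split => //; apply: lowdeg0.
rewrite big_ord_recr /=; split.
- rewrite (Nterms_add_deg IH2 (XpF_homog _ e (leq0n m))); last by lia.
  by rewrite IH1 Nterms_XpM FB_Nterms //; lia.
- apply: lowdegD.
    by move=> u /IH2; lia.
  by apply: lowdeg_homog (XpF_homog _ e (leq0n m)) _; lia.
Qed.

Lemma G_count (R : rcfType) m r e : (r < m)%N ->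
  Nterms (Fpoly R m - Hf R m r e + Hf R m r e * Fpoly R m) = ((e + 2) * m + r + 1)%N.
Proof.
move=> hr; have hm : (1 <= m)%N by lia.
rewrite Gdecomp; have [c1 c2] := sum_count R e hm.
rewrite (Nterms_add_deg (D := (e * m + m)%N) (d := (m * e + (m + m))%N)).
- rewrite (Nterms_add_deg c2 (XpF_homog _ e (ltnW hr))); last by lia.
  rewrite c1 !Nterms_XpM FB_Nterms // BF_Nterms ?(ltnW hr) //.
  lia.
- apply: lowdegD; first by move=> u /c2; lia.
  by apply: lowdeg_homog (XpF_homog _ e (ltnW hr)) _; lia.
- rewrite XpnE; apply: dhomogM; last exact: BF_homog (ltnW hr).
  by rewrite dhomogX /= mdeg_mon addn0.
- lia.
Qed.


Lemma ev2D (S : comRingType) (p q : {mpoly S[2]}) x y : ev2 (p + q) x y = ev2 p x y + ev2 q x y.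
Proof. by rewrite /ev2 mevalD. Qed.
Lemma ev2B (S : comRingType) (p q : {mpoly S[2]}) x y : ev2 (p - q) x y = ev2 p x y - ev2 q x y.
Proof. by rewrite /ev2 mevalB. Qed.
Lemma ev2N (S : comRingType) (p : {mpoly S[2]}) x y : ev2 (- p) x y = - ev2 p x y.
Proof. by rewrite /ev2 mevalN. Qed.
Lemma ev2M (S : comRingType) (p q : {mpoly S[2]}) x y : ev2 (p * q) x y = ev2 p x y * ev2 q x y.
Proof. by rewrite /ev2 mevalM. Qed.
Lemma ev2Xn (S : comRingType) (p : {mpoly S[2]}) k x y : ev2 (p ^+ k) x y = ev2 p x y ^+ k.
Proof. by rewrite /ev2 rmorphXn. Qed.
Lemma ev2_sum (S : comRingType) n (f : 'I_n -> {mpoly S[2]}) x y :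
  ev2 (\sum_(i < n) f i) x y = \sum_(i < n) ev2 (f i) x y.
Proof. by rewrite /ev2 rmorph_sum. Qed.
Lemma ev2X0 (S : comRingType) (x y : S) : ev2 ('X_0 : {mpoly S[2]}) x y = x.
Proof. by rewrite /ev2 mevalXU ffunE. Qed.
Lemma ev2X1 (S : comRingType) (x y : S) : ev2 ('X_1 : {mpoly S[2]}) x y = y.
Proof. by rewrite /ev2 mevalXU ffunE. Qed.

Definition phi (R : rcfType) (x y : R[i]) (p : {mpoly R[2]}) :=
  ev2 (map_mpoly (real_complex R) p) x y.

Lemma phiD (R : rcfType) x y (p q : {mpoly R[2]}) : phi x y (p + q) = phi x y p + phi x y q.
Proof. by rewrite /phi rmorphD ev2D. Qed.
Lemma phiB (R : rcfType) x y (p q : {mpoly R[2]}) : phi x y (p - q) = phi x y p - phi x y q.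
Proof. by rewrite /phi rmorphB ev2B. Qed.
Lemma phiN (R : rcfType) x y (p : {mpoly R[2]}) : phi x y (- p) = - phi x y p.
Proof. by rewrite /phi rmorphN ev2N. Qed.
Lemma phiM (R : rcfType) x y (p q : {mpoly R[2]}) : phi x y (p * q) = phi x y p * phi x y q.
Proof. by rewrite /phi rmorphM ev2M. Qed.
Lemma phiXn (R : rcfType) x y (p : {mpoly R[2]}) k : phi x y (p ^+ k) = phi x y p ^+ k.
Proof. by rewrite /phi rmorphXn ev2Xn. Qed.
Lemma phi_sum (R : rcfType) x y n (f : 'I_n -> {mpoly R[2]}) :
  phi x y (\sum_(i < n) f i) = \sum_(i < n) phi x y (f i).
Proof. by rewrite /phi rmorph_sum ev2_sum. Qed.
Lemma phiX0 (R : rcfType) (x y : R[i]) : phi x y ('X_0 : {mpoly R[2]}) = x.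
Proof. by rewrite /phi map_mpolyX ev2X0. Qed.
Lemma phiX1 (R : rcfType) (x y : R[i]) : phi x y ('X_1 : {mpoly R[2]}) = y.
Proof. by rewrite /phi map_mpolyX ev2X1. Qed.
Lemma phi0 (R : rcfType) (x y : R[i]) : phi x y (0 : {mpoly R[2]}) = 0.
Proof. by rewrite /phi rmorph0 /ev2 meval0. Qed.

Lemma phiF (R : rcfType) m (x y : R[i]) : phi x y (Fpoly R m) = (x + y) ^+ m.
Proof. by rewrite /Fpoly phiXn phiD phiX0 phiX1. Qed.
Lemma ev2F (R : rcfType) m (x y : R) : ev2 (Fpoly R m) x y = (x + y) ^+ m.
Proof. by rewrite /Fpoly ev2Xn ev2D ev2X0 ev2X1. Qed.

Lemma adm_of (R : rcfType) m (eta : R[i]) (H : {mpoly R[2]}) :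
  (1 <= m)%N -> eta ^+ m = 1 ->
  (forall x y, phi (eta * x) (eta * y) H = phi x y H) ->
  ev2 H 0 0 = 0 -> nonneg H -> nonneg (Fpoly R m - H + H * Fpoly R m) ->
  admissible m eta (Fpoly R m - H + H * Fpoly R m).
Proof.
move=> hm he hinv h0 hH hG; split.
- move=> x y; change (phi (eta * x) (eta * y) (Fpoly R m - H + H * Fpoly R m) =
                     phi x y (Fpoly R m - H + H * Fpoly R m)).
  by rewrite !phiD !phiN !phiM !phiF hinv -mulrDr exprMn he mul1r.
- move=> x y hxy; rewrite ev2D ev2D ev2N ev2M ev2F hxy expr1n; ring.
- exact: hG.
- rewrite ev2D ev2D ev2N ev2M ev2F h0 addr0 expr0n.
  have -> : (m == 0%N) = false by apply/negbTE; rewrite -lt0n.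
  by rewrite subr0 mul0r addr0.
- by exists H.
Qed.

Lemma nonnegXp (R : rcfType) m : nonneg (Xp R m).
Proof. by apply: nonnegXn; apply: nonnegX. Qed.
Lemma nonnegF (R : rcfType) m : nonneg (Fpoly R m).
Proof. by apply: nonnegXn; apply: nonnegD; apply: nonnegX. Qed.
Lemma nonnegBp (R : rcfType) m r : nonneg (Bp R m r).
Proof. by apply: nonnegM; apply: nonnegXn; [apply: nonnegX | apply: nonnegD; apply: nonnegX]. Qed.

Lemma phiXp_inv (R : rcfType) m (eta x y : R[i]) : eta ^+ m = 1 ->
  phi (eta * x) (eta * y) (Xp R m) = phi x y (Xp R m).
Proof. by move=> he; rewrite /Xp !phiXn !phiX0 exprMn he mul1r. Qed.

Lemma phiBp_inv (R : rcfType) m r (eta x y : R[i]) : eta ^+ m = 1 -> (r <= m)%N ->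
  phi (eta * x) (eta * y) (Bp R m r) = phi x y (Bp R m r).
Proof.
move=> he hr; rewrite /Bp !phiM !phiXn !phiD !phiX0 !phiX1 -mulrDr !exprMn.
by rewrite mulrACA -exprD subnK // he mul1r.
Qed.

Definition invar (R : rcfType) (eta : R[i]) (p : {mpoly R[2]}) :=
  forall x y, phi (eta * x) (eta * y) p = phi x y p.
Lemma invD (R : rcfType) (eta : R[i]) p q : invar eta p -> invar eta q -> invar eta (p + q).
Proof. by move=> hp hq x y; rewrite !phiD hp hq. Qed.
Lemma invM (R : rcfType) (eta : R[i]) p q : invar eta p -> invar eta q -> invar eta (p * q).
Proof. by move=> hp hq x y; rewrite !phiM hp hq. Qed.
Lemma invXn (R : rcfType) (eta : R[i]) p k : invar eta p -> invar eta (p ^+ k).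
Proof. by move=> hp x y; rewrite !phiXn hp. Qed.
Lemma inv_sum (R : rcfType) (eta : R[i]) n (f : 'I_n -> {mpoly R[2]}) :
  (forall i, invar eta (f i)) -> invar eta (\sum_(i < n) f i).
Proof. by move=> hf x y; rewrite !phi_sum; apply: eq_bigr => i _; rewrite hf. Qed.

Lemma Hf_adm (R : rcfType) m (eta : R[i]) r e : eta ^+ m = 1 -> (r < m)%N ->
  admissible m eta (Fpoly R m - Hf R m r e + Hf R m r e * Fpoly R m).
Proof.
move=> he hr; have hm : (1 <= m)%N by lia.
have hm0 : (m == 0%N) = false by apply/negbTE; rewrite -lt0n.
apply: adm_of => //.
- have iX : invar eta (Xp R m) by move=> x y; apply: phiXp_inv.
  have iB : invar eta (Bp R m r) by move=> x y; apply: phiBp_inv => //; apply: ltnW.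
  change (invar eta (Hf R m r e)); rewrite /Hf.
  apply: invD.
    apply: inv_sum => k; exact: (@invXn R eta (Xp R m) k.+1 iX).
  apply: invM; [exact: (@invXn R eta (Xp R m) e iX) | exact: iB].
- have X0 : ev2 (Xp R m) 0 0 = 0 by rewrite /Xp ev2Xn ev2X0 expr0n hm0.
  rewrite /Hf ev2D ev2_sum big1 => [|k _]; last by rewrite ev2Xn X0 expr0n.
  have hmr : (m - r == 0)%N = false by apply/negbTE; rewrite -lt0n subn_gt0.
  have B0 : ev2 (Bp R m r) 0 0 = 0.
    by rewrite /Bp ev2M ev2Xn ev2X0 expr0n hmr mul0r.
  by rewrite ev2M B0 mulr0 add0r.
- rewrite /Hf; apply: nonnegD.
    by apply: (@nonneg_sum R e (fun k => Xp R m ^+ k.+1)) => k; apply: nonnegXn; apply: nonnegXp.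
  by apply: nonnegM; [apply: nonnegXn; apply: nonnegXp | apply: nonnegBp].
- rewrite Gdecomp; apply: nonnegD; first apply: nonnegD.
  + apply: (@nonneg_sum R e (fun k => Xp R m ^+ k * (Fpoly R m - Bp R m 0))) => k.
    by apply: nonnegM; [apply: nonnegXn; apply: nonnegXp | apply: FB_nonneg].
  + by apply: nonnegM; [apply: nonnegXn; apply: nonnegXp | apply: FB_nonneg; apply: ltnW].
  + apply: nonnegM; [apply: nonnegXn; apply: nonnegXp | apply: nonnegM].
      exact: nonnegBp.
    exact: nonnegF.
Qed.

Lemma F_adm (R : rcfType) m (eta : R[i]) : (1 <= m)%N -> eta ^+ m = 1 ->
  admissible m eta (Fpoly R m - 0 + 0 * Fpoly R m).
Proof.
move=> hm he; apply: adm_of => //.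
- by move=> x y; rewrite !phi0.
- by rewrite /ev2 meval0.
- by move=> mo; rewrite mcoeff0.
- by rewrite subr0 mul0r addr0; apply: nonnegF.
Qed.

Theorem mainTheorem8 (R : rcfType) (m : nat) (eta : R[i]) :
  (2 <= m)%N -> m.-primitive_root eta ->
  [/\ (forall G : {mpoly R[2]}, admissible m eta G ->
         Nterms G = m.+1 \/ (2 * m + 1 <= Nterms G)%N),
      (exists G : {mpoly R[2]}, admissible m eta G /\ Nterms G = m.+1) &
      (forall N : nat, (2 * m + 1 <= N)%N ->
         exists G : {mpoly R[2]}, admissible m eta G /\ Nterms G = N)].
Proof.
move=> hm2 hprim; have hm : (1 <= m)%N by lia.
have he := prim_expr_order hprim.
split.
- move=> G [_ _ hG _ [H [eG hH]]].
  have [H0|] := lower hm hG hH eG; last by right.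
  by left; rewrite eG H0 subr0 mul0r addr0 /Fpoly Nterms_binom.
- exists (Fpoly R m - 0 + 0 * Fpoly R m); split; first exact: F_adm.
  by rewrite subr0 mul0r addr0 /Fpoly Nterms_binom.
- move=> N hN.
  exists (Fpoly R m - Hf R m (N.-1 %% m) (N.-1 %/ m - 2) + Hf R m (N.-1 %% m) (N.-1 %/ m - 2) * Fpoly R m).
  split; first by apply: Hf_adm => //; rewrite ltn_mod.
  rewrite G_count ?ltn_mod //.
  have hq : (2 <= N.-1 %/ m)%N by rewrite leq_divRL //; lia.
  move: hq (divn_eq N.-1 m) hN; move: (N.-1 %/ m)%N (N.-1 %% m)%N => q r hq e hN'.
  rewrite subnK //; lia.
Qed.
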